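(* Consider a finite set of users $\mathcal{I}$, a finite set of time periods $\mathcal{T}$, and a finite set of types $\mathcal{K}=\{1,\dots,K\}$. Each user $i$ has deterministic demand $D_i^t\ge 0$ in period $t$ and belongs to exactly one type $k\in\mathcal{K}$, in which case his value of lost load is $V_i^t=V_k^t$; assume $V_1^t\le V_2^t\le\cdots\le V_K^t$ for every $t$. Let $D_a^t=\sum_{i\in\mathcal{I}}D_i^t>0$. Fix a renewable capacity $r\ge 0$ and random variables $\Theta^t$ supported in $[0,1]$; let $s^t=\min(D_a^t, r\Theta^t)$ and $d_i^t=\frac{D_i^t}{D_a^t}s^t$. Fix a price $p$ with $p\le V_1^t$ for all $t$. A contract assigns to each type $k$ premium fees $(\pi_k^t)_{t\in\mathcal{T}}$; a user $i$ choosing contract item $o\in\mathcal{K}$ has cost $$CU_i(o)=\sum_{t}\pi_o^tD_i^t+\sum_t p\,\mathbb{E}[d_i^t]+\sum_t\mathbb{E}[V_i^t(D_i^t-d_i^t)]-\sum_t\mathbb{E}[(V_o^t-p)(D_i^t-d_i^t)],$$ and a user buying no insurance has cost $CU_i(0)=\sum_t p\,\mathbb{E}[d_i^t]+\sum_t\mathbb{E}[V_i^t(D_i^t-d_i^t)]$. Suppose the premium fees satisfy $$\pi_k^t-\pi_m^t=(V_k^t-V_m^t)\,\mathbb{E}\Big[1-\frac{s^t}{D_a^t}\Big]\quad\forall t\in\mathcal{T},\ \forall m,k\in\mathcal{K},$$ $$0\le \pi_k^t\le (V_k^t-p)\,\mathbb{E}\Big[1-\frac{s^t}{D_a^t}\Big]\quad\forall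 t\in\mathcal{T},\ \forall k\in\mathcal{K}.$$ Then the contract is valid: for every user $i$ of type $k$, $CU_i(k)\le CU_i(0)$ (individual rationality) and $CU_i(k)\le CU_i(m)$ for all $m\in\mathcal{K}$ (incentive compatibility). Moreover, premium fees satisfying both displayed conditions always exist.
   Context: A contract is called valid if it satisfies Individual Rationality (each user of type $k$ weakly prefers the type-$k$ contract item to not purchasing insurance, i.e. $CU_i(k)\le CU_i(0)$) and Incentive Compatibility (each user of type $k$ weakly prefers the type-$k$ item to any other item $m$, i.e. $CU_i(k)\le CU_i(m)$). The expectation is over $\Theta^t$. *)

(* Defs.v *)
From HB Require Import structures.
From mathcomp Require Import all_boot all_order all_algebra.
From mathcomp Require Import all_classical all_reals all_analysis.
Set Implicit Arguments. Unset Strict Implicit. Unset Printing Implicit Defensive.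
Import Order.TTheory GRing.Theory Num.Theory.
Local Open Scope ring_scope.

(* Real-valued expectation over the probability space P:
   E[X] := fine (E_P[X]). All integrands used below are bounded and
   measurable, hence integrable, so this is the usual expectation. *)
Definition Ex {d} {T : measurableType d} {R : realType}
  (P : probability T R) (X : T -> R) : R := fine ('E_P[X])%E.

Section Model.
Context {d : measure_display} {T : measurableType d} {R : realType}
  (P : probability T R) {I Tt : finType} {K : nat}.
Variables (D : I -> Tt -> R) (typ : I -> 'I_K) (V : 'I_K -> Tt -> R)
  (r p : R) (Theta : Tt -> T -> R).

Definition Dagg (t : Tt) : R := \sum_(i : I) D i t.
Definition supply (t : Tt) (w : T) : R := Num.min (Dagg t) (r * Theta t w).
Definition served (i : I) (t : Tt) (w : T) : R := D i t / Dagg t * supply t w.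
Definition VoLL (i : I) (t : Tt) : R := V (typ i) t.

Definition CU (pi : 'I_K -> Tt -> R) (i : I) (o : 'I_K) : R :=
  \sum_(t : Tt) pi o t * D i t
  + \sum_(t : Tt) p * Ex P (served i t)
  + \sum_(t : Tt) Ex P (fun w => VoLL i t * (D i t - served i t w))
  - \sum_(t : Tt) Ex P (fun w => (V o t - p) * (D i t - served i t w)).

Definition CU0 (i : I) : R :=
  \sum_(t : Tt) p * Ex P (served i t)
  + \sum_(t : Tt) Ex P (fun w => VoLL i t * (D i t - served i t w)).

Definition premium_conditions (pi : 'I_K -> Tt -> R) : Prop :=
  (forall (t : Tt) (m k : 'I_K),
      pi k t - pi m t = (V k t - V m t) * Ex P (fun w => 1 - supply t w / Dagg t))
  /\ (forall (t : Tt) (k : 'I_K),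
      0 <= pi k t /\ pi k t <= (V k t - p) * Ex P (fun w => 1 - supply t w / Dagg t)).

Definition valid_contract (pi : 'I_K -> Tt -> R) : Prop :=
  forall i : I, CU pi i (typ i) <= CU0 i /\ forall m : 'I_K, CU pi i (typ i) <= CU pi i m.
End Model.

(* Main.v *)
Require Import Defs.
From HB Require Import structures.
From mathcomp Require Import all_boot all_order all_algebra.
From mathcomp Require Import all_classical all_reals all_analysis.
From mathcomp Require Import ring lra measurable_realfun.
Import Order.TTheory GRing.Theory Num.Theory.
Local Open Scope ring_scope.

Lemma ExZ d (T : measurableType d) (R : realType) (P : probability T R)
  (f : T -> R) (c : R) : measurable_fun setT f -> (forall w, `|f w| <= 1) ->
  Ex P (fun w => c * f w) = c * Ex P f.
Proof.
move=> mf bf.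
have hL : f \in Lfun P 1.
  apply/Lfun1_integrable; apply: measurable_bounded_integrable => //.
    by apply: (@le_lt_trans _ _ 1%E); [exact: probability_le1 | exact: ltry].
  exists 1; split => // M M1 x _; exact: le_trans (bf x) (ltW M1).
have -> : (fun w => c * f w) = c \o* f by apply: funext => w; rewrite /= mulrC.
rewrite /Ex (expectationZl _ hL) fineM //.
exact: expectation_fin_num.
Qed.

Theorem theorem1 (d : measure_display) (T : measurableType d) (R : realType)
  (P : probability T R) (I Tt : finType) (K : nat)
  (D : I -> Tt -> R) (typ : I -> 'I_K) (V : 'I_K -> Tt -> R)
  (r p : R) (Theta : Tt -> T -> R)
  (hD : forall i t, 0 <= D i t)
  (hDa : forall t, 0 < Dagg D t)
  (hVmono : forall t (k m : 'I_K), (k <= m)%N -> V k t <= V m t)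
  (hr : 0 <= r)
  (hTheta_meas : forall t, measurable_fun setT (Theta t))
  (hTheta_01 : forall t w, 0 <= Theta t w <= 1)
  (hp : forall t (k : 'I_K), (nat_of_ord k = 0)%N -> p <= V k t) :
  (forall pi : 'I_K -> Tt -> R,
      premium_conditions P D V r p Theta pi ->
      valid_contract P D typ V r p Theta pi)
  /\ exists pi : 'I_K -> Tt -> R, premium_conditions P D V r p Theta pi.
Proof.
have hbd : forall t w, 0 <= 1 - supply D r Theta t w / Dagg D t <= 1.
  move=> t w; have Da0 := hDa t.
  have /andP[T0 T1] := hTheta_01 t w.
  have s0 : 0 <= supply D r Theta t w.
    by rewrite /supply le_min (ltW Da0) mulr_ge0.
  have s1 : supply D r Theta t w <= Dagg D t by rewrite /supply ge_min lexx.
  have q0 : 0 <= supply D r Theta t w / Dagg D t by rewrite divr_ge0 // ltW.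
  have q1 : supply D r Theta t w / Dagg D t <= 1 by rewrite ler_pdivrMr // mul1r.
  apply/andP; split; lra.
have hmeas : forall t, measurable_fun setT
    (fun w => 1 - supply D r Theta t w / Dagg D t).
  move=> t; apply: measurable_funB; first exact: measurable_cst.
  apply: measurable_funM; last exact: measurable_cst.
  exact: (measurable_minr (measurable_cst _)
            (measurable_funM (measurable_cst _) (hTheta_meas t))).
have hkey : forall i (o : 'I_K) t,
    Ex P (fun w => (V o t - p) * (D i t - served D r Theta i t w)) =
    ((V o t - p) * D i t) *
      Ex P (fun w => 1 - supply D r Theta t w / Dagg D t).
  move=> i o t; rewrite -ExZ //; last first.
    by move=> w; have /andP[a b] := hbd t w; rewrite ger0_norm.
  congr (Ex P _); apply: funext => w; rewrite /served; ring.
have hCU : forall pi i o, CU P D typ V r p Theta pi i o =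
    CU0 P D typ V r p Theta i + \sum_t D i t * (pi o t - (V o t - p) *
      Ex P (fun w => 1 - supply D r Theta t w / Dagg D t)).
  move=> pi i o; rewrite /CU /CU0 (eq_bigr _ (fun t _ => hkey i o t)).
  have -> : \sum_t D i t * (pi o t - (V o t - p) *
      Ex P (fun w => 1 - supply D r Theta t w / Dagg D t)) =
    \sum_t pi o t * D i t - \sum_t ((V o t - p) * D i t) *
      Ex P (fun w => 1 - supply D r Theta t w / Dagg D t).
    by rewrite -sumrB; apply: eq_bigr => t _; ring.
  ring.
have hE0 : forall t, 0 <= Ex P (fun w => 1 - supply D r Theta t w / Dagg D t).
  move=> t; rewrite /Ex; apply: fine_ge0; apply: expectation_ge0 => w.
  by have /andP[] := hbd t w.
split.
  move=> pi [hd hb] i; split.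
    rewrite hCU gerDl; apply: sumr_le0 => t _.
    apply: mulr_ge0_le0 => //; rewrite subr_le0; exact: (hb t (typ i)).2.
  move=> m; rewrite !hCU lerD2l; apply: ler_sum => t _.
  apply: ler_wpM2l => //; rewrite le_eqVlt; apply/orP; left; apply/eqP.
  have h := hd t m (typ i).
  have -> : pi (typ i) t = pi m t + (V (typ i) t - V m t) *
      Ex P (fun w => 1 - supply D r Theta t w / Dagg D t) by rewrite -h; ring.
  ring.
clear hkey hCU.
case: K typ V hVmono hp => [|K] typ V hVmono hp.
  by exists (fun _ _ => 0); split => t [].
exists (fun k t => (V k t - V ord0 t) *
      Ex P (fun w => 1 - supply D r Theta t w / Dagg D t)); split.
  move=> t m k /=; ring.
move=> t k /=; split.
  by apply: mulr_ge0 => //; rewrite subr_ge0; apply: hVmono.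
apply: ler_wpM2r => //; rewrite lerD2l lerN2; exact: hp.
Qed.
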